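(* Let $\mathbb{K}\in\{\mathbb{R},\mathbb{C}\}$, let $g\in\mathsf{GL}_d(\mathbb{K})$ and write $g=k_g\exp(\mu(g))k_g'$ with $k_g,k_g'\in\mathsf{K}_d$. Let $x\in\mathbb{P}(\mathbb{K}^d)$ and suppose $0<\delta,r<1$ satisfy $gB_\delta(x)\subset B_r(gx)$. Then \[\frac{\sigma_1}{\sigma_2}(g)\ge\frac{\delta}{4r}\,\mathrm{dist}\big(x,\mathbb{P}((k_g')^{-1}e_1^\perp)\big).\]
   Context: $\mathbb{K}^d$ has the standard (Hermitian) inner product and standard basis $e_1,\dots,e_d$; $\mathsf{K}_d$ is $\mathsf{O}(d)$ or $\mathsf{U}(d)$. $\sigma_1(g)\ge\dots\ge\sigma_d(g)$ are the singular values, $\mu(g)=\mathrm{diag}(\log\sigma_1(g),\dots,\log\sigma_d(g))$, so $g=k_g\exp(\mu(g))k_g'$ is a Cartan (KAK) decomposition. The metric on $\mathbb{P}(\mathbb{K}^d)$ is $d_{\mathbb{P}}([u],[v])=\sqrt{1-\frac{|\langle u,v\rangle|^2}{\|u\|^2\|v\|^2}}$, $B_\delta(x)$ is the open $d_{\mathbb{P}}$-ball, and for subsets $X,Y\subset\mathbb{P}(\mathbb{K}^d)$, $\mathrm{dist}(X,Y)$ is the minimal $d_{\mathbb{P}}$-distance between them. For a unit vector $v$, $v^\perp$ is its orthogonal complement. *)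

(* Defs.v *)
(* R is a real closed field (e.g. the reals), K = R or K = R[i]. *)
From HB Require Import structures.
From mathcomp Require Import all_boot all_order all_algebra.
From mathcomp Require Import complex.
Set Implicit Arguments. Unset Strict Implicit. Unset Printing Implicit Defensive.
Import Order.TTheory GRing.Theory Num.Theory.
Local Open Scope ring_scope.

Section RealCase.
Variable R : rcfType.

Definition ipR (d : nat) (u v : 'cV[R]_d) : R := \sum_(i < d) u i 0 * v i 0.

Definition dPR (d : nat) (u v : 'cV[R]_d) : R :=
  Num.sqrt (1 - (ipR u v) ^+ 2 / (ipR u u * ipR v v)).

Definition orthoR (d : nat) (k : 'M[R]_d) : Prop := k^T *m k = 1%:M.

Definition e1R (d : nat) : 'cV[R]_d := \col_(i < d) ((i : nat) == 0%N)%:R.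

Definition diagR (d : nat) (s : nat -> R) : 'M[R]_d := diag_mx (\row_(i < d) s i).

(* m = dist([u], P(k'^{-1} e1^perp)), the minimal d_P-distance from [u] to
   the projective hyperplane {[w] : w <> 0, <k' w, e1> = 0}. *)
Definition is_dist_hypR (d : nat) (k' : 'M[R]_d) (u : 'cV[R]_d) (m : R) : Prop :=
  (exists w : 'cV[R]_d, [/\ w != 0, ipR (k' *m w) (e1R d) = 0 & dPR u w = m]) /\
  (forall w : 'cV[R]_d, w != 0 -> ipR (k' *m w) (e1R d) = 0 -> m <= dPR u w).
End RealCase.

Section ComplexCase.
Variable R : rcfType.

Definition ipC (d : nat) (u v : 'cV[R[i]]_d) : R[i] :=
  \sum_(i < d) u i 0 * conjc (v i 0).

Definition dPC (d : nat) (u v : 'cV[R[i]]_d) : R :=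
  Num.sqrt (1 - (ComplexField.Normc.normc (ipC u v)) ^+ 2 / (ComplexField.Normc.normc (ipC u u) * ComplexField.Normc.normc (ipC v v))).

Definition unitaryC (d : nat) (k : 'M[R[i]]_d) : Prop :=
  (map_mx conjc k)^T *m k = 1%:M.

Definition e1C (d : nat) : 'cV[R[i]]_d := \col_(i < d) ((i : nat) == 0%N)%:R.

Definition diagC (d : nat) (s : nat -> R) : 'M[R[i]]_d :=
  diag_mx (\row_(i < d) real_complex R (s i)).

Definition is_dist_hypC (d : nat) (k' : 'M[R[i]]_d) (u : 'cV[R[i]]_d) (m : R) : Prop :=
  (exists w : 'cV[R[i]]_d, [/\ w != 0, ipC (k' *m w) (e1C d) = 0 & dPC u w = m]) /\
  (forall w : 'cV[R[i]]_d, w != 0 -> ipC (k' *m w) (e1C d) = 0 -> m <= dPC u w).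
End ComplexCase.

(* Main.v *)
Require Import Defs.
From HB Require Import structures.
From mathcomp Require Import all_boot all_order all_algebra.
From mathcomp Require Import complex.
From mathcomp Require Import ring lra.
Import Order.TTheory GRing.Theory Num.Theory.
Local Open Scope ring_scope.

Module CoreM.

Section Core.
Variable R : rcfType.

Lemma sqrt_lt_sq (q e : R) : 0 < e -> q < e ^+ 2 -> Num.sqrt q < e.
Proof.
move=> e0 qe; rewrite -(ger0_norm (ltW e0)) -sqrtr_sqr ltr_sqrt //.
by rewrite exprn_gt0.
Qed.

Lemma sq_lt_sqrt (q e : R) : 0 < e -> Num.sqrt q < e -> q < e ^+ 2.
Proof.
move=> e0 qe; case: (leP 0 q) => q0; last first.
  by apply: (lt_le_trans q0); rewrite sqr_ge0.
by rewrite -(sqr_sqrtr q0) ltr_pXn2r // ?nnegrE ?sqrtr_ge0 ?ltW.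
Qed.

Lemma core1 (N b rho tau delta X Y ZZ : R) :
  0 < N -> 0 <= b -> b <= N -> 0 <= tau * rho ->
  tau ^+ 2 = delta ^+ 2 * N / 4 -> 0 < delta ->
  X = N ^+ 2 + 2 * N * tau * rho + tau ^+ 2 * b -> Y = N ->
  ZZ = N + 2 * tau * rho + tau ^+ 2 ->
  Num.sqrt (1 - X / (Y * ZZ)) < delta.
Proof.
move=> N0 b0 bN tr t2 d0 -> -> ->.
apply: sqrt_lt_sq => //.
have Z0 : 0 < N + 2 * tau * rho + tau ^+ 2.
  by rewrite -mulrA; nra.
have YZ0 : 0 < N * (N + 2 * tau * rho + tau ^+ 2) by apply: mulr_gt0.
rewrite ltrBlDr -ltrBlDl -(ltr_pM2r YZ0) mulrBl divfK ?gt_eqF //.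
rewrite mul1r.
have e1 : N * (N + 2 * tau * rho + tau ^+ 2) -
    (N ^+ 2 + 2 * N * tau * rho + tau ^+ 2 * b) = tau ^+ 2 * (N - b) by ring.
have h1 : tau ^+ 2 * (N - b) <= tau ^+ 2 * N.
  by apply: ler_wpM2l; [rewrite sqr_ge0 | lra].
have e2 : tau ^+ 2 * N = delta ^+ 2 * (N * N) / 4 by rewrite t2; field.
have d2 : 0 < delta ^+ 2 by rewrite exprn_gt0.
have NZ : N <= N + 2 * tau * rho + tau ^+ 2 by rewrite -mulrA; nra.
have h3 : delta ^+ 2 * (N * N) <= delta ^+ 2 * (N * (N + 2 * tau * rho + tau ^+ 2)).
  by apply: ler_wpM2l; [exact: ltW| apply: ler_wpM2l; [exact: ltW|]].
have h4 : 0 < delta ^+ 2 * (N * N) by rewrite !mulr_gt0.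
lra.
Qed.

Lemma core2 (N N' a b rho tau s0 s1 delta r m X Y Z0' : R) :
  0 < N -> 0 <= a -> 0 <= b -> rho ^+ 2 <= b -> 0 < s1 -> s1 <= s0 ->
  s0 ^+ 2 * a + s1 ^+ 2 * b <= N' -> N' <= s0 ^+ 2 * N ->
  0 < delta -> delta < 1 -> 0 < r -> 0 <= tau * rho ->
  tau ^+ 2 = delta ^+ 2 * N / 4 ->
  X = N' ^+ 2 + 2 * N' * tau * s1 ^+ 2 * rho + tau ^+ 2 * s1 ^+ 4 * b -> Y = N' ->
  Z0' = N' + 2 * tau * s1 ^+ 2 * rho + tau ^+ 2 * s1 ^+ 2 ->
  Num.sqrt (1 - X / (Y * Z0')) < r ->
  m <= Num.sqrt (a / N) ->
  delta / (4 * r) * m <= s0 / s1.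
Proof.
move=> N0 a0 b0 rb s10 s10' hN'1 hN'2 d0 d1 r0 tr t2 -> -> -> hr hm.
have s00 : 0 < s0 by apply: lt_le_trans s10 s10'.
case: (leP m 0) => m0.
  apply: (@le_trans _ _ 0); last by rewrite divr_ge0 ?ltW.
  by rewrite pmulr_rle0 // divr_gt0 // mulr_gt0.
have aN : 0 < a / N by rewrite -sqrtr_gt0; apply: lt_le_trans hm.
have a0' : 0 < a by move: aN; rewrite pmulr_lgt0 ?invr_gt0.
have m2 : m ^+ 2 <= a / N.
  rewrite -(sqr_sqrtr (ltW aN)) ler_pXn2r // ?nnegrE ?sqrtr_ge0 ?ltW //.
have m2' : m ^+ 2 * N <= a by rewrite -ler_pdivlMr.
have s02 : 0 < s0 ^+ 2 by rewrite exprn_gt0.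
have s12 : 0 < s1 ^+ 2 by rewrite exprn_gt0.
have s1s0 : s1 ^+ 2 <= s0 ^+ 2 by rewrite ler_pXn2r // ?nnegrE ltW.
have pa : 0 < s0 ^+ 2 * a by apply: mulr_gt0.
have sb0 : 0 <= s1 ^+ 2 * b by rewrite mulr_ge0 ?sqr_ge0.
have N'0 : 0 < N' by lra.
have tr2 : 0 <= tau * rho * s1 ^+ 2 by apply: mulr_ge0 => //; apply: ltW.
have Zge : N' <= N' + 2 * tau * s1 ^+ 2 * rho + tau ^+ 2 * s1 ^+ 2.
  have : 0 <= tau ^+ 2 * s1 ^+ 2 by rewrite mulr_ge0 ?sqr_ge0.
  have -> : 2 * tau * s1 ^+ 2 * rho = 2 * (tau * rho * s1 ^+ 2) by ring.
  lra.
set ZZ := N' + _ + _ in Zge hr *.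
have Z0 : 0 < ZZ by lra.
have q := @sq_lt_sqrt _ _ r0 hr.
have YZ0 : 0 < N' * ZZ by apply: mulr_gt0.
move: q; rewrite ltrBlDr -ltrBlDl -(ltr_pM2r YZ0) mulrBl divfK ?gt_eqF // mul1r.
move=> q; have eZ : N' * ZZ - (N' ^+ 2 + 2 * N' * tau * s1 ^+ 2 * rho + tau ^+ 2 * s1 ^+ 4 * b)
   = tau ^+ 2 * s1 ^+ 2 * (N' - s1 ^+ 2 * b) by rewrite /ZZ; ring.
have lb : tau ^+ 2 * s1 ^+ 2 * (s0 ^+ 2 * a) <= tau ^+ 2 * s1 ^+ 2 * (N' - s1 ^+ 2 * b).
  by apply: ler_wpM2l; [rewrite mulr_ge0 ?sqr_ge0 | lra].
have t2N : tau ^+ 2 <= N / 4.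
  rewrite t2; have : delta ^+ 2 <= 1.
    by rewrite expr_le1 ?ltW.
  move=> h; have : delta ^+ 2 * N <= 1 * N by apply: ler_wpM2r; [apply: ltW|].
  lra.
have trb : 2 * (tau * rho) <= tau ^+ 2 + b.
  have : 0 <= (tau - rho) ^+ 2 by rewrite sqr_ge0.
  have -> : (tau - rho) ^+ 2 = tau ^+ 2 - 2 * (tau * rho) + rho ^+ 2 by ring.
  lra.
have Zle : ZZ <= 5 / 2 * (s0 ^+ 2 * N).
  rewrite /ZZ.
  have -> : 2 * tau * s1 ^+ 2 * rho = s1 ^+ 2 * (2 * (tau * rho)) by ring.
  have h1 : s1 ^+ 2 * (2 * (tau * rho)) <= s1 ^+ 2 * (tau ^+ 2 + b).
    by apply: ler_wpM2l; [apply: ltW|].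
  have h2 : tau ^+ 2 * s1 ^+ 2 <= N / 4 * s0 ^+ 2.
    apply: (@le_trans _ _ (tau ^+ 2 * s0 ^+ 2)).
      by apply: ler_wpM2l; [rewrite sqr_ge0|].
    by apply: ler_wpM2r; [apply: ltW|].
  have : 0 <= s0 ^+ 2 * a by apply: ltW.
  have e : s1 ^+ 2 * (tau ^+ 2 + b) = tau ^+ 2 * s1 ^+ 2 + s1 ^+ 2 * b by ring.
  have e' : N / 4 * s0 ^+ 2 = (s0 ^+ 2 * N) / 4 by ring.
  lra.
have ub : N' * ZZ <= (s0 ^+ 2 * N) * (5 / 2 * (s0 ^+ 2 * N)).
  by apply: ler_pM => //; apply: ltW.
have ub2 : r ^+ 2 * (N' * ZZ) <= r ^+ 2 * ((s0 ^+ 2 * N) * (5 / 2 * (s0 ^+ 2 * N))).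
  by apply: ler_wpM2l; [rewrite sqr_ge0|].
have key : delta ^+ 2 * s1 ^+ 2 * a * (s0 ^+ 2 * N) <
     (10 * r ^+ 2 * s0 ^+ 2 * N) * (s0 ^+ 2 * N).
  have e1 : tau ^+ 2 * s1 ^+ 2 * (s0 ^+ 2 * a) =
     delta ^+ 2 * s1 ^+ 2 * a * (s0 ^+ 2 * N) / 4 by rewrite t2; field.
  have e2 : r ^+ 2 * ((s0 ^+ 2 * N) * (5 / 2 * (s0 ^+ 2 * N))) =
     (10 * r ^+ 2 * s0 ^+ 2 * N) * (s0 ^+ 2 * N) / 4 by field.
  lra.
have sN : 0 < s0 ^+ 2 * N by apply: mulr_gt0.
rewrite ltr_pM2r // in key.
have k2 : delta ^+ 2 * s1 ^+ 2 * (m ^+ 2 * N) <= delta ^+ 2 * s1 ^+ 2 * a.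
  by apply: ler_wpM2l => //; rewrite mulr_ge0 ?sqr_ge0.
have k3 : (delta * s1 * m) ^+ 2 * N < (16 * r ^+ 2 * s0 ^+ 2) * N.
  have e3 : (delta * s1 * m) ^+ 2 * N = delta ^+ 2 * s1 ^+ 2 * (m ^+ 2 * N) by ring.
  have : 0 < r ^+ 2 * s0 ^+ 2 * N by rewrite !mulr_gt0 // exprn_gt0.
  have e4 : 16 * r ^+ 2 * s0 ^+ 2 * N = 10 * r ^+ 2 * s0 ^+ 2 * N + 6 * (r ^+ 2 * s0 ^+ 2 * N) by ring.
  lra.
rewrite ltr_pM2r // in k3.
have e5 : 16 * r ^+ 2 * s0 ^+ 2 = (4 * r * s0) ^+ 2 by ring.
rewrite e5 in k3.
move: k3; rewrite ltr_pXn2r ?nnegrE; last 3 first.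
- by [].
- by rewrite !mulr_ge0 // ltW.
- by rewrite !mulr_ge0 // ltW.
move=> k4.
rewrite ler_pdivlMr //.
have -> : delta / (4 * r) * m * s1 = (delta * s1 * m) / (4 * r).
  by field; rewrite gt_eqF.
rewrite ler_pdivrMr ?mulr_gt0 //.
have -> : s0 * (4 * r) = 4 * r * s0 by ring.
exact: ltW.
Qed.
End Core.

End CoreM.
Import CoreM.

Module RealM.

Section RealLemmas.
Variable R : rcfType.
Variable d : nat.
Implicit Types (x y z : 'cV[R]_d) (k : 'M[R]_d).

Definition ej (j : 'I_d) : 'cV[R]_d := \col_(i < d) (i == j)%:R.

Lemma ipR_sym x y : ipR x y = ipR y x.
Proof. by rewrite /ipR; apply: eq_bigr => i _; rewrite mulrC. Qed.

Lemma ipRDr x y z : ipR x (y + z) = ipR x y + ipR x z.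
Proof. by rewrite /ipR -big_split; apply: eq_bigr => i _; rewrite mxE mulrDr. Qed.

Lemma ipRZr x y c : ipR x (c *: y) = c * ipR x y.
Proof. by rewrite /ipR mulr_sumr; apply: eq_bigr => i _; rewrite mxE mulrCA. Qed.

Lemma ipR_ej x j : ipR x (ej j) = x j 0.
Proof.
rewrite /ipR (bigD1 j) //= big1 ?addr0; first by rewrite mxE eqxx mulr1.
by move=> i /negbTE hi; rewrite mxE hi mulr0.
Qed.

Lemma ipR_ejej j : ipR (ej j) (ej j) = 1.
Proof. by rewrite ipR_ej mxE eqxx. Qed.

Lemma ipR_mx x y : ipR x y = (x^T *m y) 0 0.
Proof. by rewrite mxE /ipR; apply: eq_bigr => i _; rewrite mxE. Qed.

Lemma ipR_orth k x y : orthoR k -> ipR (k *m x) (k *m y) = ipR x y.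
Proof.
by move=> hk; rewrite !ipR_mx trmx_mul -mulmxA (mulmxA k^T) hk mul1mx.
Qed.

Lemma dPR_orth k x y : orthoR k -> dPR (k *m x) (k *m y) = dPR x y.
Proof. by move=> hk; rewrite /dPR !ipR_orth. Qed.

Lemma ipR_pert x c j :
  ipR x (x + c *: ej j) = ipR x x + c * x j 0 /\
  ipR (x + c *: ej j) (x + c *: ej j) = ipR x x + 2 * c * x j 0 + c ^+ 2.
Proof.
rewrite ipRDr ipRZr ipR_ej; split => //.
rewrite ipRDr ipRZr (ipR_sym (x + _) x) (ipR_sym _ (ej j)) ipRDr ipRZr ipRDr ipRZr.
rewrite ipR_ej ipR_ejej (ipR_sym (ej j)) ipR_ej; ring.
Qed.

Lemma ipR_ge0 x : 0 <= ipR x x.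
Proof. by rewrite /ipR sumr_ge0 // => i _; rewrite -expr2 sqr_ge0. Qed.

Lemma ipR_eq0 x : ipR x x = 0 -> x = 0.
Proof.
move=> h; apply/matrixP => i j; rewrite (ord1 j) mxE.
have h' : \sum_(l < d) x l 0 ^+ 2 = 0.
  by apply: (etrans _ h); rewrite /ipR; apply: eq_bigr => l _; rewrite expr2.
have := @psumr_eq0P _ _ predT (fun l => x l 0 ^+ 2) (fun l _ => sqr_ge0 _) h' i isT.
by move/eqP; rewrite sqrf_eq0 => /eqP.
Qed.

Lemma two_terms (F : 'I_d -> R) (i j : 'I_d) : i != j -> (forall l, 0 <= F l) ->
  F i + F j <= \sum_l F l.
Proof.
move=> ij F0; rewrite (bigD1 i) //= (bigD1 j) /=; last by rewrite eq_sym.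
by rewrite addrA lerDl sumr_ge0.
Qed.

Lemma diag_ej (s : nat -> R) j : diagR d s *m ej j = s j *: ej j.
Proof.
apply/matrixP => i l; rewrite /diagR mul_diag_mx !mxE.
by case: (eqVneq i j) => [->|_]; rewrite ?mulr1 ?mulr0.
Qed.

Lemma diag_coord (s : nat -> R) x i : (diagR d s *m x) i 0 = s i * x i 0.
Proof. by rewrite /diagR mul_diag_mx !mxE. Qed.

End RealLemmas.
Arguments ej {R d} j.
Arguments ipR_sym {R d}. Arguments ipRDr {R d}. Arguments ipRZr {R d}.
Arguments ipR_ej {R d}. Arguments ipR_ejej {R d}. Arguments ipR_mx {R d}.
Arguments ipR_orth {R d}. Arguments dPR_orth {R d}. Arguments ipR_pert {R d}.
Arguments ipR_ge0 {R d}. Arguments ipR_eq0 {R d}. Arguments two_terms {R d}.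
Arguments diag_ej {R d}. Arguments diag_coord {R d}.

End RealM.
Import RealM.

Module CplxM.
Local Open Scope complex_scope.

Section CLemmas.
Variable R : rcfType.
Variable d : nat.
Local Notation C := R[i].
Implicit Types (x y z : 'cV[C]_d) (k : 'M[C]_d).
Local Notation normc := ComplexField.Normc.normc.

Definition nsq (z : C) : R := complex.Re z ^+ 2 + complex.Im z ^+ 2.
Definition nsum x : R := \sum_(i < d) nsq (x i 0).
Definition ejC (j : 'I_d) : 'cV[C]_d := \col_(i < d) (i == j)%:R.

Lemma mulcJ (z : C) : z * conjc z = (nsq z)%:C.
Proof. by case: z => p q; rewrite /nsq /=; simpc; congr (_ +i* _); ring. Qed.

Lemma normc_sq (z : C) : normc z ^+ 2 = nsq z.
Proof. by case: z => p q; rewrite /= sqr_sqrtr // addr_ge0 ?sqr_ge0. Qed.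

Lemma normc_real (t : R) : normc (t%:C) = `|t|.
Proof. by rewrite /= expr0n /= addr0 sqrtr_sqr. Qed.

Lemma nsq_ge0 (z : C) : 0 <= nsq z.
Proof. by rewrite addr_ge0 ?sqr_ge0. Qed.

Lemma nsum_ge0 x : 0 <= nsum x.
Proof. by rewrite sumr_ge0 // => i _; exact: nsq_ge0. Qed.

Lemma ipC_self x : ipC x x = (nsum x)%:C.
Proof.
rewrite /ipC /nsum (@rmorph_sum _ _ (real_complex R)).
by apply: eq_bigr => i _; rewrite mulcJ.
Qed.

Lemma normc_self x : normc (ipC x x) = nsum x.
Proof. by rewrite ipC_self normc_real ger0_norm ?nsum_ge0. Qed.

Lemma ipC_symJ x y : ipC y x = conjc (ipC x y).
Proof.
rewrite /ipC (@rmorph_sum _ _ (@conjc R)); apply: eq_bigr => i _.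
by rewrite rmorphM /= conjcK mulrC.
Qed.

Lemma ipCDr x y z : ipC x (y + z) = ipC x y + ipC x z.
Proof.
by rewrite /ipC -big_split; apply: eq_bigr => i _; rewrite mxE rmorphD mulrDr.
Qed.

Lemma ipCZr x y c : ipC x (c *: y) = conjc c * ipC x y.
Proof.
by rewrite /ipC mulr_sumr; apply: eq_bigr => i _; rewrite mxE rmorphM mulrCA.
Qed.

Lemma ipC_ej x j : ipC x (ejC j) = x j 0.
Proof.
rewrite /ipC (bigD1 j) //= big1 ?addr0; first by rewrite mxE eqxx conjc1 mulr1.
by move=> i /negbTE hi; rewrite mxE hi conjc0 mulr0.
Qed.

Lemma ipC_ejej j : ipC (ejC j) (ejC j) = 1.
Proof. by rewrite ipC_ej mxE eqxx. Qed.

Lemma ipC_mx x y : ipC x y = ((map_mx conjc y)^T *m x) 0 0.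
Proof. by rewrite mxE /ipC; apply: eq_bigr => i _; rewrite !mxE mulrC. Qed.

Lemma ipC_unit k x y : unitaryC k -> ipC (k *m x) (k *m y) = ipC x y.
Proof.
move=> hk; rewrite !ipC_mx (@map_mxM _ _ (@conjc R)) trmx_mul.
by rewrite -mulmxA (mulmxA _ k) hk mul1mx.
Qed.

Lemma dPC_unit k x y : unitaryC k -> dPC (k *m x) (k *m y) = dPC x y.
Proof. by move=> hk; rewrite /dPC !ipC_unit. Qed.

Lemma ipC_pert x (c : R) j :
  normc (ipC x (x + c%:C *: ejC j)) ^+ 2 =
    nsum x ^+ 2 + 2 * nsum x * c * complex.Re (x j 0) + c ^+ 2 * nsq (x j 0) /\
  normc (ipC (x + c%:C *: ejC j) (x + c%:C *: ejC j)) =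
    nsum x + 2 * c * complex.Re (x j 0) + c ^+ 2.
Proof.
have e1 : ipC x (x + c%:C *: ejC j) = (nsum x)%:C + c%:C * x j 0.
  by rewrite ipCDr ipCZr ipC_ej ipC_self conjc_real.
split.
  rewrite e1 normc_sq; case: (x j 0) => p q; rewrite /nsq /=; simpc.
  by rewrite /=; ring.
have e2 : ipC (x + c%:C *: ejC j) (x + c%:C *: ejC j) =
    (nsum x + 2 * c * complex.Re (x j 0) + c ^+ 2)%:C.
  rewrite ipCDr ipCZr (ipC_symJ x (x + _)) (ipC_symJ (ejC j) (x + _)).
  rewrite !ipCDr !ipCZr ipC_ej ipC_ejej (ipC_symJ x (ejC j)) ipC_ej ipC_self !conjc_real.
  case: (x j 0) => p q /=; simpc; congr (_ +i* _); ring.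
have e3 := ipC_self (x + c%:C *: ejC j).
rewrite e2 in e3; move/complexI: e3 => e3.
by rewrite e2 normc_real ger0_norm // e3 nsum_ge0.
Qed.


Lemma nsq_eq0 (z : C) : nsq z = 0 -> z = 0.
Proof.
case: z => p q; rewrite /nsq /= => h.
have hp : p ^+ 2 = 0 by apply/eqP; rewrite eq_le sqr_ge0 andbT; have := sqr_ge0 q; lra.
have hq : q ^+ 2 = 0 by apply/eqP; rewrite eq_le sqr_ge0 andbT; have := sqr_ge0 p; lra.
by move/eqP: hp; rewrite sqrf_eq0 => /eqP ->; move/eqP: hq; rewrite sqrf_eq0 => /eqP ->.
Qed.

Lemma nsum_eq0 x : nsum x = 0 -> x = 0.
Proof.
move=> h; apply/matrixP => i j; rewrite (ord1 j) mxE.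
have := @psumr_eq0P _ _ predT (fun l => nsq (x l 0)) (fun l _ => nsq_ge0 _) h i isT.
exact: nsq_eq0.
Qed.

Lemma nsq_scale (t : R) (z : C) : nsq (t%:C * z) = t ^+ 2 * nsq z.
Proof. by case: z => p q; rewrite /nsq /=; simpc; rewrite /=; ring. Qed.

Lemma Re_scale (t : R) (z : C) : complex.Re (t%:C * z) = t * complex.Re z.
Proof. by case: z => p q; rewrite /=; simpc. Qed.

Lemma nsq_Re (z : C) : complex.Re z ^+ 2 <= nsq z.
Proof. by rewrite /nsq lerDl sqr_ge0. Qed.

Lemma diagC_ej (s : nat -> R) j : diagC d s *m ejC j = (s j)%:C *: ejC j.
Proof.
apply/matrixP => i l; rewrite /diagC mul_diag_mx !mxE.
by case: (eqVneq i j) => [->|_]; rewrite ?mulr1 ?mulr0.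
Qed.

Lemma diagC_coord (s : nat -> R) x i : (diagC d s *m x) i 0 = (s i)%:C * x i 0.
Proof. by rewrite /diagC mul_diag_mx !mxE. Qed.

Lemma zero_nsum : nsum (0 : 'cV[C]_d) = 0.
Proof. by rewrite /nsum big1 // => i _; rewrite mxE /nsq /= expr0n /= addr0. Qed.

End CLemmas.
Arguments nsq {R}. Arguments nsum {R d}. Arguments ejC {R d} j.
Arguments mulcJ {R}. Arguments normc_sq {R}. Arguments normc_real {R}.
Arguments nsq_ge0 {R}. Arguments nsum_ge0 {R d}. Arguments ipC_self {R d}.
Arguments normc_self {R d}. Arguments ipC_symJ {R d}. Arguments ipCDr {R d}.
Arguments ipCZr {R d}. Arguments ipC_ej {R d}. Arguments ipC_ejej {R d}.
Arguments ipC_mx {R d}. Arguments ipC_unit {R d}. Arguments dPC_unit {R d}.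
Arguments ipC_pert {R d}. Arguments nsq_eq0 {R}. Arguments nsum_eq0 {R d}.
Arguments nsq_scale {R}. Arguments Re_scale {R}. Arguments nsq_Re {R}.
Arguments diagC_ej {R d}. Arguments diagC_coord {R d}. Arguments zero_nsum {R d}.

End CplxM.
Import CplxM.

Module RMainM.

Lemma real_part (R : rcfType) :
  (forall (d : nat) (g k k' : 'M[R]_d) (s : nat -> R) (u : 'cV[R]_d)
          (delta r m : R),
      (1 < d)%N ->
      g \in unitmx ->
      orthoR k -> orthoR k' ->
      (forall i, (i < d)%N -> 0 < s i) ->
      (forall i j, (i <= j)%N -> (j < d)%N -> s j <= s i) ->
      g = k *m diagR d s *m k' ->
      u != 0 ->
      0 < delta < 1 -> 0 < r < 1 ->
      (forall v : 'cV[R]_d, v != 0 -> dPR u v < delta ->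
         dPR (g *m u) (g *m v) < r) ->
      is_dist_hypR k' u m ->
      s 0%N / s 1%N >= delta / (4 * r) * m).
Proof.
move=> d g k k' s u delta r m hd _ hk hk' spos sdec -> u0 /andP[d0 d1] /andP[r0 r1] hball [_ hdist].
have hd0 : (0 < d)%N by apply: ltn_trans hd.
pose i0 : 'I_d := Ordinal hd0.
pose i1 : 'I_d := Ordinal hd.
have i01 : i0 != i1 by [].
have k'k't : k' *m k'^T = 1%:M by apply: mulmx1C.
pose y := k' *m u.
pose N := ipR y y.
have eN : N = ipR u u by rewrite /N /y ipR_orth.
have N0 : 0 < N.
  rewrite eN lt_def ipR_ge0 andbT; apply/eqP => /ipR_eq0 h; by rewrite h eqxx in u0.
pose a := y i0 0 ^+ 2.
pose b := y i1 0 ^+ 2.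
pose rho := y i1 0.
have a0 : 0 <= a by rewrite sqr_ge0.
have b0 : 0 <= b by rewrite sqr_ge0.
have abN : a + b <= N.
  rewrite /N /ipR.
  have := @two_terms R d (fun l => y l 0 * y l 0) i0 i1 i01.
  by rewrite /a /b !expr2; apply => l; rewrite -expr2 sqr_ge0.
pose D := diagR d s.
pose N' := ipR (D *m y) (D *m y).
have eN' : N' = \sum_(l < d) s l ^+ 2 * (y l 0 ^+ 2).
  rewrite /N' /ipR; apply: eq_bigr => l _; rewrite !diag_coord; ring.
have s1pos : 0 < s 1%N by apply: spos.
have s10 : s 1%N <= s 0%N by apply: sdec.
have N'lb : s 0%N ^+ 2 * a + s 1%N ^+ 2 * b <= N'.
  rewrite eN'.
  have := @two_terms R d (fun l => s l ^+ 2 * y l 0 ^+ 2) i0 i1 i01.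
  by apply => l; rewrite mulr_ge0 ?sqr_ge0.
have N'ub : N' <= s 0%N ^+ 2 * N.
  rewrite eN' /N /ipR mulr_sumr; apply: ler_sum => l _.
  rewrite -expr2; apply: ler_wpM2r; first by rewrite sqr_ge0.
  have sl := spos l (ltn_ord l).
  have h : s l <= s 0%N by apply: sdec.
  have s0p : 0 < s 0%N by apply: spos.
  by rewrite ler_pXn2r // nnegrE ltW.
have hm : m <= Num.sqrt (a / N).
  case: (eqVneq (N - a) 0) => hNa.
  - have hb : b = 0 by apply/eqP; rewrite eq_le b0 andbT; lra.
    have := hdist (k'^T *m ej i1).
    rewrite mulmxA k'k't mul1mx.
    have -> : e1R R d = ej i0 by apply/matrixP => i j; rewrite !mxE.
    rewrite ipR_ej mxE /= => /(_ _ erefl).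
    have -> : dPR u (k'^T *m ej i1) = dPR y (ej i1).
      by rewrite /y -(@dPR_orth _ _ k' u _ hk') mulmxA k'k't mul1mx.
    rewrite /dPR ipR_ej ipR_ejej.
    have -> : y i1 0 ^+ 2 = 0 by [].
    have aN : a = N by lra.
    have -> : a / N = 1 by rewrite aN divff // gt_eqF.
    rewrite mul0r subr0; apply.
    apply/eqP => h; have := congr1 (mulmx k') h.
    by rewrite mulmxA k'k't mul1mx mulmx0 => /matrixP /(_ i1 0); rewrite !mxE eqxx => /eqP; rewrite oner_eq0.
  - pose y' := y + (- y i0 0) *: ej i0.
    have [e1 e2] := ipR_pert y (- y i0 0) i0.
    have := hdist (k'^T *m y').
    rewrite mulmxA k'k't mul1mx.
    have -> : e1R R d = ej i0 by apply/matrixP => i j; rewrite !mxE.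
    rewrite ipR_ej !mxE eqxx mulr1 addrN => /(_ _ erefl).
    have -> : dPR u (k'^T *m y') = dPR y y'.
      by rewrite /y -(@dPR_orth _ _ k' u _ hk') mulmxA k'k't mul1mx.
    rewrite /dPR e1 e2 -/N.
    have -> : (N + - y i0 0 * y i0 0) = N - a by rewrite /a; ring.
    have -> : (N + 2 * - y i0 0 * y i0 0 + (- y i0 0) ^+ 2) = N - a by rewrite /a; ring.
    have -> : 1 - (N - a) ^+ 2 / (N * (N - a)) = a / N.
  field.
  by rewrite hNa gt_eqF.
    apply.
    apply/eqP => h; have hy' : y' = 0 by rewrite -[y']mul1mx -k'k't -mulmxA h mulmx0.
    have : ipR y' y' = 0 by rewrite hy' /ipR big1 // => l _; rewrite mxE mul0r.
    rewrite /y' e2 -/N.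
    have -> : (N + 2 * - y i0 0 * y i0 0 + (- y i0 0) ^+ 2) = N - a by rewrite /a; ring.
    by move/eqP; rewrite (negbTE hNa).
pose t := delta / 2 * Num.sqrt N.
pose tau := if 0 <= rho then t else - t.
have t0 : 0 <= t by rewrite mulr_ge0 ?sqrtr_ge0 // divr_ge0 // ltW.
have ttr : 0 <= tau * rho.
  rewrite /tau; case: ifP => h; first by rewrite mulr_ge0.
  by rewrite mulNr -mulrN mulr_ge0 // oppr_ge0 ltW // ltNge h.
have t2 : tau ^+ 2 = delta ^+ 2 * N / 4.
  have : t ^+ 2 = delta ^+ 2 * N / 4.
    by rewrite /t exprMn sqr_sqrtr ?ltW //; field.
  by rewrite /tau; case: ifP => _ //; rewrite sqrrN.
pose w := y + tau *: ej i1.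
have [ew1 ew2] := ipR_pert y tau i1.
have hv : k' *m (k'^T *m w) = w by rewrite mulmxA k'k't mul1mx.
have ww : ipR w w = N + 2 * tau * rho + tau ^+ 2 by rewrite ew2.
have v0 : k'^T *m w != 0.
  apply/eqP => h; have hw : w = 0 by rewrite -hv h mulmx0.
  have : ipR w w = 0 by rewrite hw /ipR big1 // => l _; rewrite mxE mul0r.
  rewrite ww => h2.
  have : 0 <= 2 * tau * rho by rewrite -mulrA mulr_ge0.
  have : 0 <= tau ^+ 2 by rewrite sqr_ge0.
  lra.
have hdu : dPR u (k'^T *m w) < delta.
  rewrite -(dPR_orth k' u _ hk') hv -/y /dPR.
  apply: (@core1 R N b rho tau delta) => //.
  - lra.
  - by rewrite ew1 -/N /b /rho; ring.
have hg := hball _ v0 hdu.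
have eg1 : k *m diagR d s *m k' *m u = k *m (D *m y) by rewrite /y /D !mulmxA.
have eg2 : k *m diagR d s *m k' *m (k'^T *m w) = k *m (D *m w).
  by rewrite -[in LHS]mulmxA hv mulmxA /D.
rewrite eg1 eg2 (dPR_orth k _ _ hk) in hg.
have eDw : D *m w = D *m y + (tau * s 1%N) *: ej i1.
  by rewrite mulmxDr -scalemxAr diag_ej scalerA mulrC.
have [ed1 ed2] := ipR_pert (D *m y) (tau * s 1%N) i1.
rewrite eDw /dPR ed1 ed2 -/N' diag_coord in hg.
apply: (@core2 R N N' a b rho tau (s 0%N) (s 1%N) delta r m _ _ _ _ _ _ _ _ _ _ _ _ _ _ _ _ _ _ _ hg hm) => //.
- have -> : s i1 = s 1%N by [].
  by rewrite /b /rho; ring.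
- have -> : s i1 = s 1%N by [].
  by rewrite /rho; ring.
Qed.

End RMainM.
Import RMainM.

Module CMainM.
Local Open Scope complex_scope.

Lemma complex_part (R : rcfType) :
  (forall (d : nat) (g k k' : 'M[R[i]]_d) (s : nat -> R) (u : 'cV[R[i]]_d)
          (delta r m : R),
      (1 < d)%N ->
      g \in unitmx ->
      unitaryC k -> unitaryC k' ->
      (forall i, (i < d)%N -> 0 < s i) ->
      (forall i j, (i <= j)%N -> (j < d)%N -> s j <= s i) ->
      g = k *m diagC d s *m k' ->
      u != 0 ->
      0 < delta < 1 -> 0 < r < 1 ->
      (forall v : 'cV[R[i]]_d, v != 0 -> dPC u v < delta ->
         dPC (g *m u) (g *m v) < r) ->
      is_dist_hypC k' u m ->
      s 0%N / s 1%N >= delta / (4 * r) * m).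
Proof.
move=> d g k k' s u delta r m hd _ hk hk' spos sdec -> u0 /andP[d0 d1] /andP[r0 r1] hball [_ hdist].
have hd0 : (0 < d)%N by apply: ltn_trans hd.
pose i0 : 'I_d := Ordinal hd0.
pose i1 : 'I_d := Ordinal hd.
have i01 : i0 != i1 by [].
pose k'H := (map_mx conjc k')^T.
have k'k't : k' *m k'H = 1%:M by apply: mulmx1C.
pose y := k' *m u.
pose N := nsum y.
have eN : N = nsum u.
  by apply: (@complexI R); rewrite -!ipC_self /N /y ipC_unit.
have N0 : 0 < N.
  rewrite eN lt_def nsum_ge0 andbT; apply/eqP => /nsum_eq0 h; by rewrite h eqxx in u0.
have nN : ComplexField.Normc.normc (ipC y y) = N by rewrite normc_self.
pose a := nsq (y i0 0).
pose b := nsq (y i1 0).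
pose rho := complex.Re (y i1 0).
have a0 : 0 <= a by apply: nsq_ge0.
have b0 : 0 <= b by apply: nsq_ge0.
have abN : a + b <= N.
  by apply: (@two_terms R d (fun l => nsq (y l 0)) i0 i1 i01) => l; apply: nsq_ge0.
pose D := diagC d s.
pose N' := nsum (D *m y).
have eN' : N' = \sum_(l < d) s l ^+ 2 * nsq (y l 0).
  by rewrite /N' /nsum; apply: eq_bigr => l _; rewrite diagC_coord nsq_scale.
have s1pos : 0 < s 1%N by apply: spos.
have s10 : s 1%N <= s 0%N by apply: sdec.
have N'lb : s 0%N ^+ 2 * a + s 1%N ^+ 2 * b <= N'.
  rewrite eN'.
  have := @two_terms R d (fun l => s l ^+ 2 * nsq (y l 0)) i0 i1 i01.
  by apply => l; rewrite mulr_ge0 ?sqr_ge0 ?nsq_ge0.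
have N'ub : N' <= s 0%N ^+ 2 * N.
  rewrite eN' /N /nsum mulr_sumr; apply: ler_sum => l _.
  apply: ler_wpM2r; first by apply: nsq_ge0.
  have sl := spos l (ltn_ord l).
  have h : s l <= s 0%N by apply: sdec.
  have s0p : 0 < s 0%N by apply: spos.
  by rewrite ler_pXn2r // nnegrE ltW.
have e1C0 : e1C R d = ejC i0 by apply/matrixP => i j; rewrite !mxE.
have hm : m <= Num.sqrt (a / N).
  case: (eqVneq (N - a) 0) => hNa.
  - have hb : b = 0 by apply/eqP; rewrite eq_le b0 andbT; lra.
    have := hdist (k'H *m ejC i1).
    rewrite mulmxA k'k't mul1mx e1C0 ipC_ej mxE /= => /(_ _ erefl).
    have -> : dPC u (k'H *m ejC i1) = dPC y (ejC i1).
      by rewrite /y -(@dPC_unit _ _ k' u _ hk') mulmxA k'k't mul1mx.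
    rewrite /dPC ipC_ej ipC_ejej nN ComplexField.Normc.normc1 normc_sq -/b hb.
    have aN : a = N by lra.
    have -> : a / N = 1 by rewrite aN divff // gt_eqF.
    rewrite mul0r subr0; apply.
    apply/eqP => h; have := congr1 (mulmx k') h.
    by rewrite mulmxA k'k't mul1mx mulmx0 => /matrixP /(_ i1 0); rewrite !mxE eqxx => /eqP; rewrite oner_eq0.
  - pose y' := y + (- y i0 0) *: ejC i0.
    have ey1 : ipC y y' = (N - a)%:C.
      rewrite ipCDr ipCZr ipC_ej ipC_self rmorphN mulNr mulrC mulcJ.
      by rewrite rmorphB.
    have y'0 : y' i0 0 = 0 by rewrite !mxE eqxx mulr1 addrN.
    have ey2 : ipC y' y' = (N - a)%:C.
      rewrite ipCDr ipCZr ipC_ej y'0 mulr0 addr0 ipC_symJ ey1.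
      by rewrite conjc_real.
    have Na0 : 0 <= N - a by lra.
    have := hdist (k'H *m y').
    rewrite mulmxA k'k't mul1mx e1C0 ipC_ej y'0 => /(_ _ erefl).
    have -> : dPC u (k'H *m y') = dPC y y'.
      by rewrite /y -(@dPC_unit _ _ k' u _ hk') mulmxA k'k't mul1mx.
    rewrite /dPC ey1 ey2 nN normc_real ger0_norm //.
    have -> : 1 - (N - a) ^+ 2 / (N * (N - a)) = a / N.
      field.
      by rewrite hNa gt_eqF.
    apply.
    apply/eqP => h; have hy' : y' = 0 by rewrite -[y']mul1mx -k'k't -mulmxA h mulmx0.
    move: ey2; rewrite hy' ipC_self zero_nsum => /complexI /esym /eqP.
    by rewrite (negbTE hNa).
pose t := delta / 2 * Num.sqrt N.
pose tau := if 0 <= rho then t else - t.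
have t0 : 0 <= t by rewrite mulr_ge0 ?sqrtr_ge0 // divr_ge0 // ltW.
have ttr : 0 <= tau * rho.
  rewrite /tau; case: ifP => h; first by rewrite mulr_ge0.
  by rewrite mulNr -mulrN mulr_ge0 // oppr_ge0 ltW // ltNge h.
have t2 : tau ^+ 2 = delta ^+ 2 * N / 4.
  have : t ^+ 2 = delta ^+ 2 * N / 4.
    by rewrite /t exprMn sqr_sqrtr ?ltW //; field.
  by rewrite /tau; case: ifP => _ //; rewrite sqrrN.
pose w := y + tau%:C *: ejC i1.
have [ew1 ew2] := ipC_pert y tau i1.
have hv : k' *m (k'H *m w) = w by rewrite mulmxA k'k't mul1mx.
have v0 : k'H *m w != 0.
  apply/eqP => h; have hw : w = 0 by rewrite -hv h mulmx0.
  move: ew2; rewrite -/w hw normc_self zero_nsum -/N -/rho => h2.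
  have : 0 <= 2 * tau * rho by rewrite -mulrA mulr_ge0.
  have : 0 <= tau ^+ 2 by rewrite sqr_ge0.
  lra.
have hdu : dPC u (k'H *m w) < delta.
  rewrite -(dPC_unit k' u _ hk') hv -/y /dPC.
  apply: (@core1 R N b rho tau delta) => //.
  - lra.
have hg := hball _ v0 hdu.
have eg1 : k *m diagC d s *m k' *m u = k *m (D *m y) by rewrite /y /D !mulmxA.
have eg2 : k *m diagC d s *m k' *m (k'H *m w) = k *m (D *m w).
  by rewrite -[in LHS]mulmxA hv mulmxA /D.
rewrite eg1 eg2 (dPC_unit k _ _ hk) in hg.
have eDw : D *m w = D *m y + (tau * s 1%N)%:C *: ejC i1.
  by rewrite mulmxDr -scalemxAr diagC_ej scalerA rmorphM mulrC.
have [ed1 ed2] := ipC_pert (D *m y) (tau * s 1%N) i1.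
rewrite eDw /dPC ed2 normc_self -/N' diagC_coord Re_scale in hg.
rewrite ed1 -/N' diagC_coord ?Re_scale nsq_scale in hg.
apply: (@core2 R N N' a b rho tau (s 0%N) (s 1%N) delta r m _ _ _ _ _ _ _ _ _ _ _ _ _ _ _ _ _ _ _ hg hm) => //.
- exact: nsq_Re.
- have -> : s i1 = s 1%N by [].
  by rewrite /b /rho; ring.
- have -> : s i1 = s 1%N by [].
  by rewrite /rho; ring.
Qed.

End CMainM.
Import CMainM.

Theorem lemma2p2 (R : rcfType) :
  (* K = R *)
  (forall (d : nat) (g k k' : 'M[R]_d) (s : nat -> R) (u : 'cV[R]_d)
          (delta r m : R),
      (1 < d)%N ->
      g \in unitmx ->
      orthoR k -> orthoR k' ->
      (forall i, (i < d)%N -> 0 < s i) ->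
      (forall i j, (i <= j)%N -> (j < d)%N -> s j <= s i) ->
      g = k *m diagR d s *m k' ->
      u != 0 ->
      0 < delta < 1 -> 0 < r < 1 ->
      (forall v : 'cV[R]_d, v != 0 -> dPR u v < delta ->
         dPR (g *m u) (g *m v) < r) ->
      is_dist_hypR k' u m ->
      s 0%N / s 1%N >= delta / (4 * r) * m) /\
  (* K = C *)
  (forall (d : nat) (g k k' : 'M[R[i]]_d) (s : nat -> R) (u : 'cV[R[i]]_d)
          (delta r m : R),
      (1 < d)%N ->
      g \in unitmx ->
      unitaryC k -> unitaryC k' ->
      (forall i, (i < d)%N -> 0 < s i) ->
      (forall i j, (i <= j)%N -> (j < d)%N -> s j <= s i) ->
      g = k *m diagC d s *m k' ->
      u != 0 ->
      0 < delta < 1 -> 0 < r < 1 ->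
      (forall v : 'cV[R[i]]_d, v != 0 -> dPC u v < delta ->
         dPC (g *m u) (g *m v) < r) ->
      is_dist_hypC k' u m ->
      s 0%N / s 1%N >= delta / (4 * r) * m).
Proof.
split; [exact: RMainM.real_part | exact: CMainM.complex_part].
Qed.
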